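(* Let $X$ be a subshift with shift map $\sigma$ and let $\mu$ be a $\sigma$-invariant Borel probability measure on $X$. For $x \in X$ and $n\in\mathbb{N}$ let $P_n(x) = \{y\in X: y_i = x_i \text{ for } 0\le i<n\}$ and $R_n(x) = \inf\{k>0 : x_{[k,k+n)} = x_{[0,n)}\}$. Suppose that for $\mu$-a.e. $x \in X$ the quantity $\limsup_{n\to\infty} -\frac{1}{n^{\beta}}\log\mu(P_n(x))$, as a function of $\beta>0$, has critical value $c$. Then for $\mu$-a.e. $x\in X$ the critical value of $\limsup_{n\to\infty}\frac{1}{n^{\beta}}\log R_n(x)$ (as a function of $\beta>0$) is at most $c$; that is, $\limsup_{n\to\infty}\frac{1}{n^{\beta}}\log R_n(x) = 0$ for every $\beta>c$.
   Context: Critical value: for a family of quantities $F(\beta)\in[0,\infty]$ indexed by $\beta>0$, we say $F$ has critical value $c$ if $F(\beta) = \infty$ for all $0<\beta<c$ and $F(\beta) = 0$ for all $\beta > c$. *)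

(* Defs.v *)
From HB Require Import structures.
From mathcomp Require Import all_boot all_order all_algebra.
From mathcomp Require Import all_classical all_reals all_analysis.
Set Implicit Arguments. Unset Strict Implicit. Unset Printing Implicit Defensive.
Import Order.TTheory GRing.Theory Num.Theory.
Local Open Scope classical_set_scope.
Local Open Scope ring_scope.

(* One-sided sequences over a finite (nonempty, witnessed by a0) alphabet A. *)
Definition seqs (A : Type) (a0 : A) : Type := nat -> A.

Section Seqs.
Variables (A : finType) (a0 : A).
HB.instance Definition _ := Choice.on (seqs a0).
HB.instance Definition _ := isPointed.Build (seqs a0) (fun _ => a0).

Definition cyl (n : nat) (x : seqs a0) : set (seqs a0) :=
  [set y | forall i, (i < n)%N -> y i = x i].

Definition cylinders : set (set (seqs a0)) :=
  [set C | exists n x, C = cyl n x].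

(* The full shift with the sigma-algebra generated by cylinders
   (= Borel sigma-algebra of the product of discrete topologies). *)
Definition shiftspace := g_sigma_algebraType cylinders.

Definition sshift (x : shiftspace) : shiftspace := fun i => x i.+1.

(* X is closed in the product topology (discrete alphabet), written out. *)
Definition seq_closed (X : set shiftspace) : Prop :=
  forall x : shiftspace, (forall n, exists2 y, X y & cyl n x y) -> X x.

Definition subshift (X : set shiftspace) : Prop :=
  seq_closed X /\ (forall x, X x -> X (sshift x)).

Definition P (X : set shiftspace) (n : nat) (x : shiftspace) : set shiftspace :=
  X `&` cyl n x.

(* first return time R_n(x) = inf {k > 0 : x_[k,k+n) = x_[0,n)}, in \bar R
   (+oo when no such k) *)
Definition return_time {R : realType} (n : nat) (x : shiftspace) : \bar R :=
  ereal_inf [set (k%:R)%:E | k in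
     [set k : nat | (0 < k)%N /\ forall i, (i < n)%N -> x (k + i) = x i]].
End Seqs.

Section Quantities.
Variables (R : realType) (A : finType) (a0 : A).

Definition neglog_meas (mu : {measure set (shiftspace a0) -> \bar R})
    (X : set (shiftspace a0)) (x : shiftspace a0) (beta : R) (n : nat) : \bar R :=
  if mu (P X n x) == 0%E then +oo%E
  else (- ln (fine (mu (P X n x))) / (n%:R `^ beta))%:E.

Definition log_return (x : shiftspace a0) (beta : R) (n : nat) : \bar R :=
  match (return_time n x : \bar R) with
  | r%:E => (ln r / (n%:R `^ beta))%:E
  | +oo%E => +oo%E
  | -oo%E => -oo%E
  end.
End Quantities.

Definition critical_value {R : realType} (F : R -> \bar R) (c : R) : Prop :=
  (forall beta, 0 < beta -> beta < c -> F beta = +oo%E) /\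
  (forall beta, c < beta -> F beta = 0%E).

(* Main.v *)
Require Import Defs.
From HB Require Import structures.
From mathcomp Require Import all_boot all_order all_algebra.
From mathcomp Require Import all_classical all_reals all_analysis.
From mathcomp Require Import lra ring.
Import Order.TTheory GRing.Theory Num.Theory.
Local Open Scope classical_set_scope.
Local Open Scope ring_scope.
Set Implicit Arguments. Unset Strict Implicit. Unset Printing Implicit Defensive.

Section Aux.
Variables (A : finType) (a0 : A).
Local Notation T := (shiftspace a0).

Definition ext N (u : {ffun 'I_N -> A}) : T :=
  fun i => match @insub _ (fun k => (k < N)%N) _ i with Some j => u j | None => a0 end.

Lemma ext_lt N (u : {ffun 'I_N -> A}) i (hi : (i < N)%N) : ext u i = u (Ordinal hi).
Proof. by rewrite /ext insubT. Qed.

Lemma cyl_meas N (x : T) : measurable (cyl N x : set T).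
Proof. by apply: sub_sigma_algebra; exists N, x. Qed.

Lemma fdet_meas N (S : set T) :
  (forall x y : T, (forall i, (i < N)%N -> x i = y i) -> S x -> S y) ->
  measurable (S : set T).
Proof.
move=> hS.
have -> : S = \bigcup_(u in [set u : {ffun 'I_N -> A} | S (ext u)]) cyl N (ext u).
  apply/seteqP; split => x.
  - move=> Sx; exists [ffun j => x (nat_of_ord j)].
      apply: hS Sx => i hi; by rewrite ext_lt ffunE.
    by move=> i hi /=; rewrite ext_lt ffunE.
  - move=> [u /= Su cx]; apply: hS Su => i hi; by rewrite cx.
apply: fin_bigcup_measurable; first exact: finite_finset.
by move=> u _; exact: cyl_meas.
Qed.
End Aux.

Section Aux2.
Variables (A : finType) (a0 : A).
Local Notation T := (shiftspace a0).

Definition fdet N (S : set T) :=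
  forall x y : T, (forall i, (i < N)%N -> x i = y i) -> S x -> S y.

Definition shiftn k (y : T) : T := fun i => y (k + i)%N.

Lemma fdet_shift k N S : fdet N S -> fdet (k + N) (shiftn k @^-1` S).
Proof.
move=> hS x y hxy; apply: hS => i hi; rewrite /shiftn hxy //.
by rewrite ltn_add2l.
Qed.

Lemma closed_meas (X : set T) : seq_closed X -> measurable X.
Proof.
move=> cX.
have -> : X = \bigcap_(N in [set: nat]) [set y : T | exists z, X z /\ @cyl _ a0 N y z].
  apply/seteqP; split => x.
  - by move=> Xx N _; exists x; split => // i.
  - move=> h; apply: cX => n; have [z [Xz cz]] := h n I.
    by exists z.
apply: bigcapT_measurable => N; apply: (@fdet_meas _ _ N).
move=> x y hxy [z [Xz cz]]; exists z; split => // i hi.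
by rewrite cz // hxy.
Qed.

Lemma shiftnS k (y : T) : shiftn k.+1 y = shiftn k (sshift y).
Proof. by apply/funext => i; rewrite /shiftn /sshift addSn. Qed.

Lemma shiftn_shiftn j k (y : T) : shiftn j (shiftn k y) = shiftn (k + j) y.
Proof. by apply/funext => i; rewrite /shiftn addnA. Qed.

Variables (R : realType) (mu : probability T R).
Hypothesis inv : forall B : set T, measurable B -> mu (@sshift _ a0 @^-1` B) = mu B.

Lemma inv_shiftn j N S : fdet N S -> mu (shiftn j @^-1` S) = mu S.
Proof.
move=> hS; elim: j => [|j IH].
  by congr (mu _); apply/seteqP; split => x /=; rewrite /shiftn;
    (have -> : (fun i => x (0 + i)%N) = x by apply/funext => i);
    rewrite ?add0n.
have -> : shiftn j.+1 @^-1` S = @sshift _ a0 @^-1` (shiftn j @^-1` S).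
  by apply/seteqP; split => x /=; rewrite shiftnS.
by rewrite inv ?IH //; apply: fdet_meas; exact: fdet_shift hS.
Qed.
End Aux2.

Section Kac.
Variables (A : finType) (a0 : A).
Local Notation T := (shiftspace a0).

Definition Eset n (e : T) m : set T :=
  [set y : T | @cyl _ a0 n e y /\
     forall k, (0 < k)%N -> (k < m)%N -> ~ @cyl _ a0 n e (shiftn k y)].

Lemma fdet_Eset n e m : fdet (m + n) (Eset n e m).
Proof.
move=> x y hxy [c1 c2]; split.
  move=> i hi; rewrite -hxy ?c1 //; exact: leq_trans hi (leq_addl _ _).
move=> k k0 km cy; apply: (c2 k k0 km) => i hi.
rewrite /shiftn hxy; first exact: cy.
apply: (@leq_trans (m + i)); [by rewrite ltn_add2r | by rewrite leq_add2l ltnW].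
Qed.


Variables (R : realType) (mu : probability T R).
Hypothesis inv : forall B : set T, measurable B -> mu (@sshift _ a0 @^-1` B) = mu B.

Lemma kac n e m : (mu (Eset n e m) *+ m <= 1)%E.
Proof.
pose D (j : 'I_m) := shiftn j @^-1` Eset n e m.
have mD j : measurable (D j).
  apply: (@fdet_meas _ _ (j + (m + n))); move=> x y hxy; rewrite /D /= => hx. exact: (fdet_shift (k:=j) (@fdet_Eset n e m) hxy hx).
have <- : (\sum_(j < m) mu (D j))%E = (mu (Eset n e m) *+ m)%E.
  rewrite (eq_bigr (fun=> mu (Eset n e m))); first by rewrite sumr_const card_ord.
  by move=> j _; rewrite /D (inv_shiftn inv _ (@fdet_Eset n e m)).
rewrite -measure_semi_additive_ord //.
- by apply: probability_le1; apply: bigsetU_measurable => j _.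
- apply/trivIsetP => i j _ _ nij.
  wlog lij : i j nij / (i < j)%N.
    move=> H; have [lij|lji|eij] := ltngtP i j; first exact: H.
      by rewrite setIC; apply: H => //; rewrite eq_sym.
    by move/val_inj: eij => eij; rewrite eij eqxx in nij.
  apply/seteqP; split => // y [[_ Ei] [Ej _]].
  apply: (Ei (j - i)%N); first by rewrite subn_gt0.
    by rewrite (leq_ltn_trans (leq_subr _ _)).
  by rewrite shiftn_shiftn subnKC // ltnW.
- by apply: bigsetU_measurable => j _.
Qed.
End Kac.

Section Bad.
Variables (R : realType) (A : finType) (a0 : A).
Local Notation T := (shiftspace a0).
Variables (X : set T) (mu : probability T R).
Hypothesis inv : forall B : set T, measurable B -> mu (@sshift _ a0 @^-1` B) = mu B.
Hypothesis mX : measurable X.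
Hypothesis X1 : mu X = 1%E.

Lemma ext_ord n (w : {ffun 'I_n -> A}) (j : 'I_n) : ext a0 w j = w j.
Proof. by rewrite (ext_lt a0 w (ltn_ord j)); congr (w _); apply: val_inj. Qed.

Lemma cyl_ext_inj n (w w' : {ffun 'I_n -> A}) (y : T) :
  @cyl _ a0 n (ext a0 w) y -> @cyl _ a0 n (ext a0 w') y -> w = w'.
Proof.
move=> c1 c2; apply/ffunP => j.
by rewrite -!ext_ord -(c1 j (ltn_ord j)) -(c2 j (ltn_ord j)).
Qed.

Lemma cyl_ext_self n (x : T) : @cyl _ a0 n (ext a0 [ffun j : 'I_n => x j]) x.
Proof. by move=> i hi; rewrite ext_lt ffunE. Qed.

Definition Kn (n : nat) : R := (n.+1 * n.+2)%:R.
Definition am n (x : T) : R := fine (mu (P X n x)).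
Definition thr n (x : T) : nat := (Num.truncn (Kn n / am n x)).+1.
Definition Bad n : set T :=
  \bigcup_(w in [set: {ffun 'I_n -> A}]) (X `&` Eset n (ext a0 w) (thr n (ext a0 w))).

Lemma mufin (B : set T) : measurable B -> mu B = (fine (mu B))%:E.
Proof. by move=> mB; rewrite fineK // fin_num_measure. Qed.

Lemma Kn_gt0 n : 0 < Kn n.
Proof. by rewrite /Kn ltr0n muln_gt0. Qed.

Lemma mE n (e : T) m : measurable (Eset n e m : set T).
Proof. exact: (@fdet_meas _ _ (m + n) _ (@fdet_Eset _ _ n e m)). Qed.

Lemma word_bound n (w : {ffun 'I_n -> A}) :
  (mu (X `&` Eset n (ext a0 w) (thr n (ext a0 w))) <=
   mu (X `&` @cyl _ a0 n (ext a0 w)) * ((Kn n)^-1)%:E)%E.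
Proof.
set e := ext a0 w; set m := thr n e.
have mC : measurable (X `&` @cyl _ a0 n e) by apply: measurableI => //; exact: cyl_meas.
have pE : mu (X `&` @cyl _ a0 n e) = (am n e)%:E by rewrite /am /P -mufin.
have a_ge0 : 0 <= am n e by rewrite -lee_fin -pE.
have sub : X `&` Eset n e m `<=` X `&` @cyl _ a0 n e by move=> y [Xy [cy _]].
have mXE : measurable (X `&` Eset n e m) by apply: measurableI => //; exact: mE.
rewrite pE.
have [a0e|apos] := eqVneq (am n e) 0.
  rewrite a0e mul0e; apply: (@le_trans _ _ (mu (X `&` @cyl _ a0 n e))).
    by apply: le_measure; rewrite ?inE.
  by rewrite pE a0e.
have apos' : 0 < am n e by rewrite lt_def apos a_ge0.
apply: (@le_trans _ _ (mu (Eset n e m))).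
  by apply: le_measure; rewrite ?inE //; exact: mE.
have hk := kac inv n e m.
rewrite (mufin (mE n e m)) in hk *.
set b := fine (mu (Eset n e m)) in hk *.
have b_ge0 : 0 <= b by rewrite fine_ge0.
rewrite -EFin_natmul lee_fin -mulr_natr in hk.
have -> : ((am n e)%:E * ((Kn n)^-1)%:E)%E = ((am n e) / Kn n)%:E by []. rewrite lee_fin.
have hm : Kn n / am n e < m%:R by rewrite /m /thr truncnS_gt.
rewrite ltr_pdivrMr // in hm.
rewrite ler_pdivlMr ?Kn_gt0 //.
nra.
Qed.

Lemma X_cover n : X = \bigcup_(w in [set: {ffun 'I_n -> A}]) (X `&` @cyl _ a0 n (ext a0 w)).
Proof.
apply/seteqP; split => x.
  by move=> Xx; exists [ffun j : 'I_n => x j] => //; split => //; exact: cyl_ext_self.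
by move=> [w _ []].
Qed.

Lemma mBad n : measurable (Bad n).
Proof.
apply: fin_bigcup_measurable; first exact: finite_finset.
by move=> w _; apply: measurableI => //; exact: mE.
Qed.

Lemma Bad_bound n : (mu (Bad n) <= ((Kn n)^-1)%:E)%E.
Proof.
rewrite /Bad measure_fin_bigcup //; first last.
- by move=> w _; apply: measurableI => //; exact: mE.
- apply/trivIsetP => w w' _ _ nw; apply/seteqP; split => // y [[_ [c1 _]] [_ [c2 _]]].
  by rewrite (cyl_ext_inj c1 c2) eqxx in nw.
- exact: finite_finset.
apply: (le_trans (lee_fsum _ (fun w _ => word_bound w))); first exact: finite_finset.
rewrite -ge0_mule_fsuml // -measure_fin_bigcup //.
- rewrite -X_cover.
  have h : forall z : \bar R, z = 1%E -> (z * ((Kn n)^-1)%:E <= ((Kn n)^-1)%:E)%E by move=> z ->; rewrite mul1e.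
  by apply: h; exact: X1.
- exact: finite_finset.
- apply/trivIsetP => w w' _ _ nw; apply/seteqP; split => // y [[_ c1] [_ c2]].
  by rewrite (cyl_ext_inj c1 c2) eqxx in nw.
- by move=> w _; apply: measurableI => //; exact: cyl_meas.
Qed.
End Bad.

Lemma partial_Kn (R : realType) N :
  (\sum_(0 <= k < N) ((@Kn R k)^-1)%:E = (1 - (N.+1%:R)^-1)%:E)%E.
Proof.
elim: N => [|N IH]; first by rewrite big_geq // invr1 subrr.
rewrite big_nat_recr //= IH -EFinD /Kn; congr (_%:E).
rewrite natrM; field.
have := ler0n R N => hN; apply/andP; split; apply/eqP; lra.
Qed.

Lemma series_Kn (R : realType) : (\sum_(k <oo) ((@Kn R k)^-1)%:E <= 1)%E.
Proof.
apply: lime_le.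
  by apply: is_cvg_nneseries => n _ _; rewrite lee_fin invr_ge0 ltW // Kn_gt0.
apply: nearW => N; rewrite partial_Kn lee_fin lerBlDr lerDl invr_ge0 ler0n //.
Qed.

Lemma esup0_near (R : realType) (u : (\bar R)^nat) (e : R) :
  limn_esup u = 0%E -> 0 < e -> \forall n \near \oo, (u n <= e%:E)%E.
Proof.
rewrite /limn_esup limf_esupE => h e0.
have : (ereal_inf [set ereal_sup (u @` V) | V in (\oo : set_system nat)] < e%:E)%E.
  by rewrite h lte_fin.
move=> /ereal_inf_lt [_ [V hV <-]] hlt.
apply: filterS hV => n Vn; apply: ltW; apply: le_lt_trans hlt.
by apply: ereal_sup_ubound; exists n.
Qed.

Lemma near_esup0 (R : realType) (u : (\bar R)^nat) :
  (forall n, (0 <= u n)%E) ->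
  (forall e : R, 0 < e -> \forall n \near \oo, (u n <= e%:E)%E) ->
  limn_esup u = 0%E.
Proof.
move=> u0 h; apply/eqP; rewrite eq_le; apply/andP; split; last first.
  by apply: limf_esup_ge0 => //; case => N _ hN; apply: (hN N).

apply/lee_addgt0Pr => e e0; rewrite add0e /limn_esup limf_esupE.
apply: (@le_trans _ _ (ereal_sup (u @` [set n | (u n <= e%:E)%E]))).
  by apply: ereal_inf_lbound; exists [set n | (u n <= e%:E)%E] => //; exact: h.
by apply: ge_ereal_sup => _ [n hn <-].
Qed.

Section RT.
Variables (R : realType) (A : finType) (a0 : A).
Local Notation T := (shiftspace a0).

Lemma RT_le n (x : T) k : (0 < k)%N -> (forall i, (i < n)%N -> x (k + i)%N = x i) ->
  (@return_time _ _ R n x <= (k%:R)%:E)%E.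
Proof. by move=> k0 hk; apply: ereal_inf_lbound; exists k. Qed.

Lemma RT_ge1 n (x : T) : (1 <= @return_time _ _ R n x)%E.
Proof. by apply: le_ereal_inf_tmp => _ [k [k0 _] <-]; rewrite lee_fin ler1n. Qed.

Lemma log_return_ge0 (x : T) beta n : (0 <= @log_return R _ a0 x beta n)%E.
Proof.
rewrite /log_return; have := RT_ge1 n x.
case: (return_time n x) => // r; rewrite lee_fin => r1.
by rewrite lee_fin divr_ge0 ?powR_ge0 // ln_ge0.
Qed.

Lemma log_return_fin (x : T) beta n k : (0 < k)%N ->
  (forall i, (i < n)%N -> x (k + i)%N = x i) ->
  exists r, [/\ 1 <= r, r <= k%:R & @log_return R _ a0 x beta n = (ln r / (n%:R `^ beta))%:E].
Proof.
move=> k0 hk; have := RT_le k0 hk; have := RT_ge1 n x.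
rewrite /log_return; case: (return_time n x) => //.
  by move=> r; rewrite !lee_fin => r1 rk; exists r.

Qed.
End RT.

Section Const.
Variables (R : realType) (A : finType) (a0 : A).
Local Notation T := (shiftspace a0).
Variables (X : set T) (mu : probability T R).
Hypothesis inv : forall B : set T, measurable B -> mu (@sshift _ a0 @^-1` B) = mu B.
Hypothesis mX : measurable X.

Lemma inter_ne (B C : set T) : measurable B -> measurable C ->
  (1 < mu B + mu C)%E -> exists y, B y /\ C y.
Proof.
move=> mB mC h; apply/not_existsP => /= hn.
have BC0 : B `&` C = set0 by apply/seteqP; split => // y [By Cy]; exact: (hn y).
have mBC : measurable (B `|` C) by apply: measurableU.
have := probability_le1 mu mBC.
by rewrite measureU // leNgt h.
Qed.

Lemma mP n (x : T) : measurable (P X n x).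
Proof. by apply: measurableI => //; exact: cyl_meas. Qed.

Lemma am_ge0 n x : 0 <= am X mu n x.
Proof. by rewrite /am fine_ge0. Qed.

Lemma am_le1 n x : am X mu n x <= 1.
Proof.
by rewrite /am -lee_fin -mufin ?probability_le1 //; exact: mP.
Qed.

Lemma muP n x : mu (P X n x) = (am X mu n x)%:E.
Proof. by rewrite /am -mufin //; exact: mP. Qed.

Lemma neglogE x beta n : neglog_meas mu X x beta n =
  if (am X mu n x)%:E == 0%E then +oo%E
  else ((- ln (am X mu n x)) / (n%:R `^ beta))%:E.
Proof.
rewrite /neglog_meas; set m := (X in (if X == 0%E then _ else _)).
have -> : m = (am X mu n x)%:E by exact: muP.
by [].
Qed.

Lemma neglog_fin x beta n e :
  (neglog_meas mu X x beta n <= e%:E)%E ->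
  0 < am X mu n x /\ neglog_meas mu X x beta n = ((- ln (am X mu n x)) / (n%:R `^ beta))%:E.
Proof.
rewrite neglogE; case: ifPn => [_|h0]; first by rewrite leNgt ltey.
move=> _; split => //; rewrite lt_def am_ge0 andbT.
by apply: contra h0 => /eqP az; rewrite az.
Qed.

Lemma const_case (x : T) beta : beta <= 0 ->
  limn_esup (neglog_meas mu X x beta) = 0%E -> forall i, x i.+1 = x i.
Proof.
move=> b0 hF.
have ln2 : 0 < ln (2 : R) by rewrite ln_gt0 // ltr1n.
have [N _ hN] := esup0_near hF (divr_gt0 ln2 (ltr0n R 2)).
have half n : (N <= n)%N -> (0 < n)%N -> 2^-1 < am X mu n x.
  move=> Nn n0; have [apos hE] := neglog_fin (hN n Nn).
  have := hN n Nn; rewrite hE lee_fin => h.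
  have p0 : 0 < n%:R `^ beta by rewrite powR_gt0 // ltr0n.
  have p1 : n%:R `^ beta <= 1.
    have h1 : (1 <= n%:R :> R) by rewrite ler1n.
    by have := ler_powR h1 b0; rewrite powRr0.
  have l0 : 0 <= - ln (am X mu n x) by rewrite oppr_ge0 ln_le0 // am_le1.
  have h2 : - ln (am X mu n x) <= - ln (am X mu n x) / n%:R `^ beta.
    by rewrite ler_pdivlMr //; nra.
  have h3 : ln (2^-1) < ln (am X mu n x) by rewrite lnV ?posrE //; lra.
  by rewrite ltr_ln ?posrE // in h3.
move=> i; set n := maxn N i.+1.
have Nn : (N <= n)%N by rewrite leq_maxl.
have in_ : (i < n)%N by rewrite leq_maxr.
have n0 : (0 < n)%N by rewrite (leq_ltn_trans _ in_).
have mS : measurable (@sshift _ a0 @^-1` @cyl _ a0 n x : set T).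
  apply: (@fdet_meas _ _ n.+1) => y z hyz; rewrite /sshift /= => cy j hj.
  by rewrite -hyz // -cy.
have [y [[_ c1] c2]] : exists y, P X n.+1 x y /\ (@sshift _ a0 @^-1` @cyl _ a0 n x) y.
  apply: inter_ne => //; first exact: mP.
  rewrite inv; last exact: cyl_meas.
  have : (mu (P X n x) <= mu (@cyl _ a0 n x))%E.
    by apply: le_measure; rewrite ?inE //; [exact: mP | exact: cyl_meas | move=> z []].
  rewrite !muP; move: (mu (cyl n x)) => m hm.
  have h1 := half n.+1 (leqW Nn) isT; have h2 := half n Nn n0.
  apply: (@lt_le_trans _ _ ((am X mu n.+1 x)%:E + (am X mu n x)%:E)%E).
    by rewrite -EFinD lte_fin; lra.
  by rewrite leeD2l.
rewrite -c1 ?ltnS ?(ltnW in_) //.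
by have := c2 i in_; rewrite /sshift.
Qed.
End Const.

Lemma lnK_small (R : realType) (beta e : R) : 0 < beta -> 0 < e ->
  \forall n \near \oo, ln (@Kn R n) / (n%:R `^ beta) <= e.
Proof.
move=> b0 e0.
set g := 2 / beta.
have g0 : 0 < g by rewrite divr_gt0.
have l6 : 0 <= ln (6 : R) by rewrite ln_ge0 // ler1n.
set C := ln (6 : R) + 2 * g.
have [N hN] : exists N : nat, (C / e) `^ g <= N%:R.
  by exists (Num.truncn ((C / e) `^ g)).+1; apply: ltW; rewrite truncnS_gt.
exists (maxn N 1) => // n /= hn.
have Nn : (N <= n)%N by rewrite (leq_trans _ hn) // leq_maxl.
have n1 : (1 <= n)%N by rewrite (leq_trans _ hn) // leq_maxr.
set s := (n%:R : R).
have s1 : 1 <= s by rewrite ler1n.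
have s0 : 0 < s by lra.
set t := s `^ (g^-1).
have t1 : 1 <= t.
  by rewrite -(powRr0 s) /t; apply: ler_powR => //; rewrite invr_ge0 ltW.
have pE : s `^ beta = t * t.
  rewrite /t.
  have -> : beta = g^-1 * 2%:R by rewrite /g invf_div; field.
  by rewrite powRrM powR_mulrn ?powR_ge0 // expr2.
have lns : ln s <= t * g.
  have : ln t < t by apply: ln_sublinear; lra.
  rewrite /t ln_powR => h.
  have -> : ln s = (g^-1 * ln s) * g by rewrite mulrAC mulVf ?mul1r // gt_eqF.
  by rewrite ler_pM2r // ltW.
have Kle : @Kn R n <= 6 * (s * s).
  rewrite /Kn /s natrM -!natr1.
  have := ler0n R n; nra.
have K0 : 0 < @Kn R n by apply: Kn_gt0.
have lnK : ln (@Kn R n) <= ln (6 : R) + 2 * ln s.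
  apply: (@le_trans _ _ (ln (6 * (s * s)))).
    by rewrite ler_ln // posrE; nra.
  rewrite lnM ?posrE // ?mulr_gt0 // lnM ?posrE //; lra.
have tC : C <= e * t.
  have h1 : (C / e) `^ g <= s by apply: le_trans hN _; rewrite ler_nat.
  have : ((C / e) `^ g) `^ (g^-1) <= t.
    apply: ge0_ler_powR => //; rewrite ?invr_ge0 ?nnegrE ?powR_ge0 //; try lra.

  rewrite -powRrM mulfV ?gt_eqF // powRr1; last by apply: divr_ge0; [rewrite /C; lra | lra].
  by rewrite ler_pdivrMr // mulrC.
rewrite pE ler_pdivrMr ?mulr_gt0 //; try lra.
have h1 : ln (6 : R) <= ln 6 * t by nra.
have h2 : C * t <= e * t * t by rewrite ler_pM2r //; lra.
rewrite /C in h2; nra.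
Qed.

Section Pos.
Variables (R : realType) (A : finType) (a0 : A).
Local Notation T := (shiftspace a0).
Variables (X : set T) (mu : probability T R).
Hypothesis mX : measurable X.

Lemma cyl_ext_eq n (x : T) : @cyl _ a0 n (ext a0 [ffun j : 'I_n => x j]) = @cyl _ a0 n x.
Proof.
have hx := @cyl_ext_self _ _ n x.
by apply/seteqP; split => y cy i hi; rewrite cy // hx.
Qed.

Lemma good_ret n (x : T) : X x -> ~ Bad X mu n x ->
  exists k, [/\ (0 < k)%N, (k < thr X mu n x)%N &
                forall i, (i < n)%N -> x (k + i)%N = x i].
Proof.
move=> Xx nB; apply: contrapT => hk; apply: nB.
exists [ffun j : 'I_n => x j] => //; split => //; split; first exact: cyl_ext_self.
move=> k k0 kt cy; apply: hk; exists k; split => //.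
  by move: kt; rewrite /thr /am /P cyl_ext_eq.
by move=> i hi; have := cy i hi; rewrite /shiftn => ->; rewrite -(@cyl_ext_self _ _ n x i hi).
Qed.

Lemma pos_case (x : T) beta : X x -> 0 < beta ->
  limn_esup (neglog_meas mu X x beta) = 0%E ->
  (exists N, forall n, (N <= n)%N -> ~ Bad X mu n x) ->
  limn_esup (log_return x beta) = 0%E.
Proof.
move=> Xx b0 hF [N hN].
apply: near_esup0; first by move=> n; exact: log_return_ge0.
move=> e e0.
have e2 : 0 < e / 2 by rewrite divr_gt0.
have [N1 _ h1] := esup0_near hF e2.
have [N2 _ h2] := lnK_small b0 e2.
exists (maxn N (maxn N1 N2)) => // n /= hn.
have hNn : (N <= n)%N by rewrite (leq_trans _ hn) // leq_maxl.
have hN1 : (N1 <= n)%N by rewrite (leq_trans _ hn) // (leq_trans _ (leq_maxr _ _)) // leq_maxl.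
have hN2 : (N2 <= n)%N by rewrite (leq_trans _ hn) // (leq_trans _ (leq_maxr _ _)) // leq_maxr.
have [apos hE] := neglog_fin mX (h1 n hN1).
have := h1 n hN1; rewrite hE lee_fin => hneg.
have hK := h2 n hN2.
have [k [k0 kt hk]] := good_ret Xx (hN n hNn).
have [r [r1 rk ->]] := log_return_fin beta k0 hk.
rewrite lee_fin.
set a := am X mu n x in apos hneg kt *.
set p := n%:R `^ beta in hneg hK *.
have K0 := Kn_gt0 R n.
have hka : k%:R <= Kn R n / a.
  move: kt; rewrite /thr -/a ltnS => kt.
  have : (k%:R : R) <= (Num.truncn (Kn R n / a))%:R by rewrite ler_nat.
  move/le_trans; apply; rewrite truncn_le divr_ge0 // ltW //.
have Ka0 : 0 < Kn R n / a by rewrite divr_gt0.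
have hln : ln r <= ln (Kn R n) - ln a.
  rewrite -ln_div ?posrE // ler_ln ?posrE //; last by lra.
  exact: le_trans rk hka.
have : ln r / p <= (ln (Kn R n) - ln a) / p by rewrite ler_wpM2r // invr_ge0 powR_ge0.
rewrite mulrBl; move: hneg; rewrite mulNr => hneg.
lra.
Qed.
End Pos.

Unset Implicit Arguments. Set Strict Implicit. Set Printing Implicit Defensive.

Theorem lemma4p6 (R : realType) (A : finType) (a0 : A)
  (X : set (shiftspace a0)) (mu : probability (shiftspace a0) R) (c : R) :
  subshift X ->
  mu X = 1%E ->
  (forall B : set (shiftspace a0), measurable B ->
     mu (@sshift _ a0 @^-1` B) = mu B) ->
  {ae mu, forall x, X x ->
     critical_value (fun beta => limn_esup (neglog_meas mu X x beta)) c} ->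
  {ae mu, forall x, X x ->
     forall beta, c < beta -> limn_esup (log_return x beta) = 0%E}.
Proof.
move=> [cX _] hX1 inv hae.
have mX := closed_meas cX.
have mB : forall k, measurable (Bad X mu k) by move=> k; exact: mBad.
set L := lim_sup_set (Bad X mu).
have mL : measurable L.
  apply: bigcapT_measurable => k; apply: bigcup_measurable => j _; exact: mB.
have L0 : mu L = 0%E.
  apply: lim_sup_set_cvg0 => //.
  apply: (le_lt_trans (@lee_nneseries R (fun n => mu (Bad X mu n)) (fun n => ((Kn R n)^-1)%:E) xpredT 0 _ _)).
  - by move=> i _ _; exact: measure_ge0.
  - by move=> n _; exact: (Bad_bound inv mX hX1).
  by apply: (le_lt_trans (series_Kn R)); rewrite ltry.
have hL : {ae mu, forall x, ~ L x}.
  exists L; split => // x /=; exact: contrapT.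
have hXa : {ae mu, forall x, X x}.
  exists (~` X); split => //; first exact: measurableC.
  by rewrite probability_setC // hX1 subee.
apply: filterS3 hae hL hXa => x hc nL Xx _ beta cb.
have hF := (hc Xx).2 beta cb.
have [N hN] : exists N, forall n, (N <= n)%N -> ~ Bad X mu n x.

  apply: contrapT => hne; apply: nL; rewrite /L /lim_sup_set => N _.
  apply: contrapT => hb; apply: hne; exists N => n hn bn; apply: hb.
  by exists n.
have [b0|b0] := ltP 0 beta; first exact: (pos_case mX Xx b0 hF (ex_intro _ N hN)).
have hc1 := const_case inv mX b0 hF.
apply: near_esup0; first by move=> n; exact: log_return_ge0.
move=> e e0; apply: nearW => n.
have [r [r1 rk ->]] := @log_return_fin R A a0 x beta n 1 isT (fun i _ => hc1 i).
have -> : r = 1 by apply/eqP; rewrite eq_le r1 andbT.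
by rewrite ln1 mul0r lee_fin ltW.
Qed.
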